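(* Let $p_1,\dots,p_m$ be discrete probability distributions each with (at most) $n$ states. Then there exists a minimum-entropy coupling of $p_1,\dots,p_m$ whose support (number of tuples with nonzero probability) has size at most $nm-(m-1)$.
   Context: A coupling of $p_1,\dots,p_m$ is a joint probability distribution $\mathbf P(i_1,\dots,i_m)$ on $[n]^m$ whose $k$-th marginal equals $p_k$ for every $k$ (distributions with fewer states are padded with zero-probability states). A minimum-entropy coupling minimizes the Shannon entropy $\sum_i \mathbf P(i)\log_2(1/\mathbf P(i))$ among all couplings. *)

(* Defs.v *)
From mathcomp Require Import all_boot all_order all_algebra.
From mathcomp Require Import reals exp.
Set Implicit Arguments. Unset Strict Implicit. Unset Printing Implicit Defensive.
Import Order.TTheory GRing.Theory Num.Theory.
Local Open Scope ring_scope.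

(* A probability distribution on the states 'I_n (padded with zeros if fewer). *)
Definition is_distr (R : realType) (n : nat) (p : {ffun 'I_n -> R}) : Prop :=
  (forall i, 0 <= p i) /\ \sum_(i < n) p i = 1.

Definition tuples (m n : nat) := {ffun 'I_m -> 'I_n}.

Definition is_coupling (R : realType) (m n : nat) (p : 'I_m -> {ffun 'I_n -> R})
    (P : {ffun tuples m n -> R}) : Prop :=
  [/\ (forall t, 0 <= P t), \sum_(t : tuples m n) P t = 1 &
      forall (k : 'I_m) (j : 'I_n), \sum_(t : tuples m n | t k == j) P t = p k j].

Definition log2 (R : realType) (x : R) : R := ln x / ln 2.

Definition entropy (R : realType) (m n : nat) (P : {ffun tuples m n -> R}) : R :=
  \sum_(t : tuples m n) (if P t == 0 then 0 else P t * log2 (P t)^-1).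

Definition is_min_entropy_coupling (R : realType) (m n : nat)
    (p : 'I_m -> {ffun 'I_n -> R}) (P : {ffun tuples m n -> R}) : Prop :=
  is_coupling p P /\ forall Q, is_coupling p Q -> entropy P <= entropy Q.

Definition support_size (R : realType) (m n : nat) (P : {ffun tuples m n -> R}) : nat :=
  #|[set t : tuples m n | P t != 0]|.

(* Main.v *)
Require Import Defs.
From mathcomp Require Import all_boot all_order all_algebra.
From mathcomp Require Import reals exp.
From mathcomp Require Import ring lra zify.
From Stdlib Require Import Classical.
Set Implicit Arguments. Unset Strict Implicit. Unset Printing Implicit Defensive.
Import Order.TTheory GRing.Theory Num.Theory.
Local Open Scope ring_scope.

Section Analytic.
Variable R : realType.

Definition gfun (x : R) : R := if x == 0 then 0 else x * ln x.

Lemma ln_le_sub1 (y : R) : 0 < y -> ln y <= y - 1.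
Proof.
move=> y0; have := @le_ln1Dx R (y - 1).
have -> : 1 + (y - 1) = y by ring.
apply; lra.
Qed.

Lemma tangent (x c : R) : 0 <= x -> 0 < c -> x * ln c + x - c <= gfun x.
Proof.
move=> x0 c0; rewrite /gfun; have [->|xn0] := eqVneq x 0; first by lra.
have xp : 0 < x by rewrite lt_def xn0 x0.
have h := ln_le_sub1 (divr_gt0 c0 xp).
rewrite ln_div ?posrE // in h.
have : x * (ln c - ln x) <= x * (c / x - 1) by rewrite ler_pM2l.
rewrite mulrBr mulrBr mulrCA divff ?mulr1; last by rewrite gt_eqF.
lra.
Qed.

Lemma gconvex (a b x y : R) : 0 <= a -> 0 <= b -> a + b = 1 -> 0 <= x -> 0 <= y ->
  gfun (a * x + b * y) <= a * gfun x + b * gfun y.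
Proof.
move=> a0 b0 ab x0 y0.
have c0 : 0 <= a * x + b * y by rewrite addr_ge0 // mulr_ge0.
have [ce|cn] := eqVneq (a * x + b * y) 0.
  rewrite ce /gfun eqxx.
  have := ce; move/eqP; rewrite (paddr_eq0 (mulr_ge0 a0 x0) (mulr_ge0 b0 y0)).
  move=> /andP[/eqP ax /eqP bx].
  case: (eqVneq x 0) => [xe|xn]; case: (eqVneq y 0) => [ye|yn]; rewrite ?xe ?ye ?eqxx ?(negbTE xn) ?(negbTE yn); try lra.
  - have : b = 0 by apply/eqP; move/eqP: bx; rewrite mulf_eq0 (negbTE yn) orbF.
    move=> ->; lra.
  - have : a = 0 by apply/eqP; move/eqP: ax; rewrite mulf_eq0 (negbTE xn) orbF.
    move=> ->; lra.
  - have : a = 0 by apply/eqP; move/eqP: ax; rewrite mulf_eq0 (negbTE xn) orbF.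
    have : b = 0 by apply/eqP; move/eqP: bx; rewrite mulf_eq0 (negbTE yn) orbF.
    lra.
set c := a * x + b * y.
have cp : 0 < c by rewrite lt_def cn c0.
have hx := tangent x0 cp; have hy := tangent y0 cp.
have e1 : a * (x * ln c + x - c) + b * (y * ln c + y - c) = gfun c.
  rewrite /gfun (negbTE cn) /c.
  have -> : b = 1 - a by lra.
  ring.
rewrite -e1; apply: lerD; exact: ler_wpM2l.
Qed.

End Analytic.

Section Generic.
Variable R : realType.

Lemma fin_min (X : finType) (A : Type) (P : A -> Prop) (key : A -> X) (v : A -> R) :
  (forall a b, P a -> P b -> key a = key b -> a = b) ->
  (exists a, P a) -> exists a, P a /\ forall b, P b -> v a <= v b.
Proof.
move=> inj [a0 Pa0].
suff: forall s : seq X, (exists a, P a /\ key a \in s) ->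
    exists a, P a /\ key a \in s /\ forall b, P b -> key b \in s -> v a <= v b.
  move=> /(_ (enum X)) [].
    by exists a0; rewrite mem_enum.
  by move=> a [Pa [_ H]]; exists a; split=> // b Pb; apply: H; rewrite ?mem_enum.
elim=> [|x s IH] [a [Pa ka]]; first by rewrite in_nil in ka.
case: (classic (exists a, P a /\ key a \in s)) => [Hs|Hs].
- have [a1 [Pa1 [ks1 H1]]] := IH Hs.
  case: (classic (exists c, P c /\ key c = x)) => [[c [Pc kc]]|Hc].
  + case: (leP (v a1) (v c)) => hv.
    * exists a1; split; [done|split; first by rewrite in_cons ks1 orbT].
      move=> b Pb; rewrite in_cons => /orP[/eqP kb|kb]; last exact: H1.
      by have -> : b = c by apply: inj => //; rewrite kb kc.
    * exists c; split; [done|split; first by rewrite in_cons kc eqxx].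
      move=> b Pb; rewrite in_cons => /orP[/eqP kb|kb].
        by have -> : b = c by apply: inj => //; rewrite kb kc.
      exact: (le_trans (ltW hv) (H1 b Pb kb)).
  + exists a1; split; [done|split; first by rewrite in_cons ks1 orbT].
    move=> b Pb; rewrite in_cons => /orP[/eqP kb|kb]; last exact: H1.
    by exfalso; apply: Hc; exists b.
- have kax : key a = x.
    move: ka; rewrite in_cons => /orP[/eqP //|ks].
    by exfalso; apply: Hs; exists a.
  exists a; split; [done|split; first by rewrite in_cons kax eqxx].
  move=> b Pb; rewrite in_cons => /orP[/eqP kb|kb].
    by have -> : b = a by apply: inj => //; rewrite kb kax.
  by exfalso; apply: Hs; exists b.
Qed.

Lemma exists_neg (X : finType) (d : X -> R) :
  \sum_t d t = 0 -> (exists t, d t != 0) -> exists t, d t < 0.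
Proof.
move=> s0 [t1 dt1]; apply: NNPP => H.
have ge : forall t, true -> 0 <= d t.
  move=> t _; rewrite leNgt; apply/negP => lt; apply: H; by exists t.
by move: dt1; rewrite (psumr_eq0P ge s0) // eqxx.
Qed.

Lemma step_dir (X : finType) (Q d : X -> R) :
  (forall t, 0 <= Q t) -> (forall t, Q t = 0 -> d t = 0) -> (exists t, d t < 0) ->
  exists lam, 0 < lam /\ (forall t, 0 <= Q t + lam * d t) /\
    exists t0, Q t0 != 0 /\ Q t0 + lam * d t0 = 0.
Proof.
move=> Q0 supp [t1 dt1].
have [t0 [dt0 H]] := @fin_min X X (fun t => d t < 0) id (fun t => Q t / - d t)
  (fun a b _ _ e => e) (ex_intro _ t1 dt1).
have Qt0 : Q t0 != 0.
  by apply/eqP => e; move: dt0; rewrite (supp _ e) ltxx.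
have Qp : 0 < Q t0 by rewrite lt_def Qt0 Q0.
have lp : 0 < Q t0 / - d t0 by rewrite divr_gt0 // oppr_gt0.
exists (Q t0 / - d t0); split => //; split.
  move=> t; case: (ltP (d t) 0) => dt.
    have := H t dt; rewrite ler_pdivlMr ?oppr_gt0 // mulrN => h; lra.
  by rewrite addr_ge0 // mulr_ge0 // ltW.
exists t0; split => //.
by rewrite invrN mulrN mulNr -mulrA mulVf ?mulr1 ?subrr // lt_eqF.
Qed.

End Generic.

Definition zmarg (R : realType) (m n : nat) (d : {ffun tuples m n -> R}) : Prop :=
  \sum_t d t = 0 /\ forall (k : 'I_m) (j : 'I_n), \sum_(t : tuples m n | t k == j) d t = 0.

Section Coup.
Variables (R : realType) (m n : nat) (p : 'I_m -> {ffun 'I_n -> R}).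
Local Notation T := (tuples m n).

Definition basic (Q : {ffun T -> R}) := forall d : {ffun T -> R},
  (forall t, Q t = 0 -> d t = 0) -> zmarg d -> d = 0.

Lemma ent_g (Q : {ffun T -> R}) : (forall t, 0 <= Q t) ->
  entropy Q = - (\sum_t gfun (Q t)) / ln 2.
Proof.
move=> Q0; rewrite /entropy mulNr mulr_suml -sumrN; apply: eq_bigr => t _.
rewrite /gfun; case: eqVneq => [qe|qn]; first by rewrite mul0r oppr0.
have qp : 0 < Q t by rewrite lt_def qn Q0.
by rewrite /log2 lnV ?posrE // mulNr mulrN mulrA.
Qed.

Lemma comb (Q d : {ffun T -> R}) l : is_coupling p Q -> zmarg d ->
  (forall t, 0 <= Q t + l * d t) -> is_coupling p [ffun t => Q t + l * d t].
Proof.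
move=> [Q0 Q1 Qm] [d0 dm] h; split.
- by move=> t; rewrite ffunE.
- under eq_bigr do rewrite ffunE.
  by rewrite big_split /= -mulr_sumr d0 mulr0 addr0.
- move=> k j; under eq_bigr do rewrite ffunE.
  by rewrite big_split /= -mulr_sumr dm mulr0 addr0.
Qed.

Lemma supp_lt (Q d : {ffun T -> R}) l : (forall t, Q t = 0 -> d t = 0) ->
  (exists t0, Q t0 != 0 /\ Q t0 + l * d t0 = 0) ->
  (support_size [ffun t => (Q t + l * d t)%R] < support_size Q)%N.
Proof.
move=> supp [t0 [q0 e0]]; rewrite /support_size; apply: proper_card.
apply/properP; split.
  apply/subsetP => t; rewrite !inE ffunE; apply: contraNN => /eqP e.
  by rewrite e (supp _ e) mulr0 addr0.
by exists t0; rewrite !inE ?ffunE ?q0 ?e0 ?eqxx.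
Qed.

Lemma improve (Q d : {ffun T -> R}) : is_coupling p Q ->
  (forall t, Q t = 0 -> d t = 0) -> zmarg d -> d <> 0 ->
  exists Q', is_coupling p Q' /\ (support_size Q' < support_size Q)%N /\
             entropy Q' <= entropy Q.
Proof.
move=> cQ supp zd dn0.
have [Q0 _ _] := cQ.
have [d0 dm] := zd.
have ex : exists t, d t != 0.
  apply: NNPP => H; apply: dn0; apply/ffunP => t; rewrite ffunE.
  by apply/eqP; apply: NNPP => h; apply: H; exists t; apply/negP.
have [l1 [l1p [l1n l1z]]] := step_dir Q0 supp (exists_neg d0 ex).
have [l2 [l2p [l2n l2z]]] : exists lam, 0 < lam /\ (forall t, 0 <= Q t + lam * - d t) /\
    exists t0, Q t0 != 0 /\ Q t0 + lam * - d t0 = 0.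
  apply: (step_dir Q0).
    by move=> t /supp ->; rewrite oppr0.
  apply: exists_neg; first by rewrite sumrN d0 oppr0.
  by case: ex => t h; exists t; rewrite oppr_eq0.
have cQ1 := comb cQ zd l1n.
have l2n' : forall t, 0 <= Q t + (- l2) * d t by move=> t; rewrite mulNr -mulrN.
have cQ2 := comb cQ zd l2n'.
have s1 := supp_lt supp l1z.
have s2 : (support_size [ffun t => (Q t + (- l2) * d t)%R] < support_size Q)%N.
  apply: supp_lt => //; case: l2z => t0 [h1 h2]; exists t0; split => //.
  by rewrite mulNr -mulrN.
set Q1 := [ffun t => Q t + l1 * d t] in cQ1 s1.
set Q2 := [ffun t => Q t + (- l2) * d t] in cQ2 s2.
have [Q10 _ _] := cQ1; have [Q20 _ _] := cQ2.
set a := l2 / (l1 + l2); set b := l1 / (l1 + l2).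
have a0 : 0 <= a by rewrite divr_ge0 // ltW // addr_gt0.
have b0 : 0 <= b by rewrite divr_ge0 // ltW // addr_gt0.
have ab : a + b = 1.
  by rewrite /a /b -mulrDl addrC divff // gt_eqF // addr_gt0.
have eQ : forall t, Q t = a * Q1 t + b * Q2 t.
  move=> t; rewrite /a /b !ffunE; field.
  by rewrite gt_eqF // addr_gt0.
have conv : \sum_t gfun (Q t) <= a * \sum_t gfun (Q1 t) + b * \sum_t gfun (Q2 t).
  rewrite !mulr_sumr -big_split /=; apply: ler_sum => t _.
  by rewrite eQ; apply: gconvex.
have ln2 : 0 < (ln 2 : R)^-1 by rewrite invr_gt0 ln_gt0 // ltr1n.
have key : forall Q' : {ffun T -> R}, (forall t, 0 <= Q' t) ->
    \sum_t gfun (Q t) <= \sum_t gfun (Q' t) -> entropy Q' <= entropy Q.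
  by move=> Q' h hs; rewrite !ent_g // ler_pM2r // lerN2.
case: (leP (\sum_t gfun (Q t)) (\sum_t gfun (Q1 t))) => h1.
  by exists Q1; split => //; split => //; apply: key.
case: (leP (\sum_t gfun (Q t)) (\sum_t gfun (Q2 t))) => h2.
  by exists Q2; split => //; split => //; apply: key.
exfalso.
have : a * \sum_t gfun (Q1 t) + b * \sum_t gfun (Q2 t) < \sum_t gfun (Q t).
  have -> : \sum_t gfun (Q t) = a * \sum_t gfun (Q t) + b * \sum_t gfun (Q t).
    by rewrite -mulrDl ab mul1r.
  have ap : 0 < a by rewrite divr_gt0 // addr_gt0.
  by rewrite ltr_leD // ?ltr_pM2l // ler_wpM2l // ltW.
lra.
Qed.

Lemma descent (s : nat) (Q : {ffun T -> R}) : (support_size Q <= s)%N ->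
  is_coupling p Q -> exists Q', is_coupling p Q' /\ basic Q' /\ entropy Q' <= entropy Q.
Proof.
elim: s Q => [|s IH] Q hs cQ;
  (case: (classic (basic Q)) => [bQ|nb]; first by exists Q; split => //; split).
- have [d [h1 [h2 h3]]] : exists d : {ffun T -> R},
      (forall t, Q t = 0 -> d t = 0) /\ zmarg d /\ d <> 0.
    apply: NNPP => H; apply: nb => d h1 h2; apply: NNPP => h3; apply: H.
    by exists d.
  have [Q' [_ [lt _]]] := improve cQ h1 h2 h3.
  by move: (leq_trans lt hs).
- have [d [h1 [h2 h3]]] : exists d : {ffun T -> R},
      (forall t, Q t = 0 -> d t = 0) /\ zmarg d /\ d <> 0.
    apply: NNPP => H; apply: nb => d h1 h2; apply: NNPP => h3; apply: H.
    by exists d.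
  have [Q' [cQ' [lt le]]] := improve cQ h1 h2 h3.
  have [Q'' [c'' [b'' le'']]] := IH Q' (leq_trans lt hs) cQ'.
  by exists Q''; split => //; split => //; apply: le_trans le.
Qed.

Lemma basic_uniq (Q Q' : {ffun T -> R}) : is_coupling p Q -> is_coupling p Q' ->
  basic Q -> [set t | Q t != 0] = [set t | Q' t != 0] -> Q = Q'.
Proof.
move=> [_ s1 m1] [_ s2 m2] bQ eS.
have := bQ [ffun t => Q t - Q' t].
have h1 : forall t, Q t = 0 -> [ffun t => Q t - Q' t] t = 0.
  move=> t e; rewrite ffunE e.
  have : t \notin [set t | Q' t != 0] by rewrite -eS inE e eqxx.
  by rewrite inE negbK => /eqP ->; rewrite subrr.
have h2 : zmarg [ffun t => Q t - Q' t].
  split.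
    by under eq_bigr do rewrite ffunE; rewrite sumrB s1 s2 subrr.
  by move=> k j; under eq_bigr do rewrite ffunE; rewrite sumrB m1 m2 subrr.
move=> /(_ h1 h2) e; apply/ffunP => t.
by move/ffunP: e => /(_ t); rewrite !ffunE => /eqP; rewrite subr_eq0 => /eqP.
Qed.

Lemma prod_coupling : (forall k, is_distr (p k)) ->
  is_coupling p [ffun t : T => \prod_k p k (t k)].
Proof.
move=> hp; split.
- by move=> t; rewrite ffunE prodr_ge0 // => k _; case: (hp k).
- under eq_bigr do rewrite ffunE.
  rewrite -(bigA_distr_bigA (fun k j => p k j)).
  by rewrite big1 // => k _; case: (hp k).
- move=> k j.
  rewrite (big_mkcond (fun t : T => t k == j)).
  under eq_bigr do rewrite ffunE.
  rewrite (eq_bigr (fun t : T =>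
      \prod_k0 (if k0 == k then p k0 (t k0) * (t k0 == j)%:R else p k0 (t k0)))); last first.
    move=> t _; rewrite [in RHS](bigD1 k) //= eqxx.
    under [in RHS]eq_bigr => i /negPf ik do rewrite ik.
    by case: eqP => _; [rewrite mulr1 (bigD1 k) | rewrite mulr0 mul0r].
  rewrite -(bigA_distr_bigA (fun k0 j0 => if k0 == k then p k0 j0 * (j0 == j)%:R else p k0 j0)).
  rewrite (bigD1 k) //= eqxx.
  rewrite [X in _ * X]big1; last by move=> i /negPf ->; case: (hp i).
  rewrite mulr1 (bigD1 j) //= eqxx mulr1 big1 ?addr0 // => i /negPf ->.
  by rewrite mulr0.
Qed.

End Coup.

Section Kernel.
Variables (R : realType) (m n' : nat).
Local Notation T := (tuples m n'.+1).

Lemma kernel (S : {set T}) : (m * n' + 1 < #|S|)%N ->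
  exists d : {ffun T -> R}, d <> 0 /\ (forall t, t \notin S -> d t = 0) /\ zmarg d.
Proof.
move=> hS.
pose C := option ('I_m * 'I_n')%type.
pose col (c : C) (t : T) : R :=
  match c with None => 1 | Some (k, j) => (t k == widen_ord (leqnSn n') j)%:R end.
pose A := \matrix_(i < #|S|, c < #|{: C}|) col (enum_val c) (enum_val i).
have cardC : #|{: C}| = (m * n' + 1)%N by rewrite card_option card_prod !card_ord addn1.
have kn0 : kermx A != 0.
  rewrite kermx_eq0 /row_free; apply/negP => /eqP e.
  have rk := rank_leq_col A; rewrite e cardC in rk.
  by move: (leq_ltn_trans rk hS); rewrite ltnn.
have [i0 ri0] : exists i0, row i0 (kermx A) != 0.
  apply: NNPP => H; move/negP: kn0; apply; apply/eqP/row_matrixP => i.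
  rewrite row0; apply: NNPP => h; apply: H; exists i; exact/eqP.
set u := row i0 (kermx A) in ri0.
have uA : u *m A = 0 by rewrite /u -row_mul mulmx_ker row0.
have [i1 ui1] : exists i1, u 0 i1 != 0.
  apply: NNPP => H; move/negP: ri0; apply; apply/eqP/rowP => i.
  rewrite [RHS]mxE; apply: NNPP => h; apply: H; exists i; exact/eqP.
pose d := [ffun t : T => \sum_(i | enum_val i == t) u 0 i].
have dsum : forall g : T -> R, \sum_t d t * g t = \sum_i u 0 i * g (enum_val i).
  move=> g; under eq_bigr do rewrite ffunE mulr_suml.
  rewrite (exchange_big_dep xpredT) //=; apply: eq_bigr => i _.
  by rewrite (big_pred1 (enum_val i)) // => t; rewrite /= eq_sym.
have hu : forall c : C, \sum_t d t * col c t = 0.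
  move=> c; rewrite dsum.
  move/matrixP: uA => /(_ 0 (enum_rank c)); rewrite !mxE => h.
  apply: (etrans _ h).
  by apply: eq_bigr => i _; rewrite [A _ _]mxE enum_rankK.
have tot : \sum_t d t = 0.
  by have := hu None; under eq_bigr do rewrite /= mulr1.
have hw : forall k (j' : 'I_n'), \sum_(t : T | t k == widen_ord (leqnSn n') j') d t = 0.
  move=> k j'; rewrite big_mkcond /=; apply: (etrans _ (hu (Some (k, j')))).
  by apply: eq_bigr => t _ /=; case: eqP; rewrite ?mulr1 ?mulr0.
have hm : forall k, \sum_(t : T | t k == ord_max) d t = 0.
  move=> k; move: tot.
  rewrite (partition_big (fun t : T => t k) predT) //= big_ord_recr /=.
  rewrite big1 ?add0r // => j' _; exact: hw.
exists d; split; last split; last split => //.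
- move=> e; move/ffunP: e => /(_ (enum_val i1)).
  rewrite !ffunE (big_pred1 i1) => [e|i]; first by move: ui1; rewrite e eqxx.
  by rewrite /= (inj_eq enum_val_inj).
- move=> t tS; rewrite ffunE big_pred0 // => i; apply/eqP => e.
  by move: (enum_valP i); rewrite e (negbTE tS).
- move=> k j; have [jlt|jge] := ltnP j n'.
    have -> : j = widen_ord (leqnSn n') (Ordinal jlt) by apply: val_inj.
    exact: hw.
  have -> : j = ord_max.
    by apply: val_inj => /=; apply/eqP; rewrite eqn_leq jge andbT -ltnS ltn_ord.
  exact: hm.
Qed.

End Kernel.

Theorem lemma1 (R : realType) (m n : nat) (p : 'I_m -> {ffun 'I_n -> R})
  (hp : forall k, is_distr (p k)) :
  exists P : {ffun tuples m n -> R},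
    is_min_entropy_coupling p P /\
    ((support_size P)%:Z <= (n * m)%:Z - (m%:Z - 1))%R.
Proof.
have cprod := prod_coupling hp.
have [Q0 [c0 [b0 _]]] := descent (leqnn _) cprod.
have [P [[cP bP] Pmin]] := @fin_min R {set tuples m n} {ffun tuples m n -> R}
  (fun Q => is_coupling p Q /\ basic Q) (fun Q => [set t | Q t != 0]) (@entropy R m n)
  (fun a b ha hb e => basic_uniq ha.1 hb.1 ha.2 e) (ex_intro _ Q0 (conj c0 b0)).
exists P; split.
  split => // Q cQ.
  have [Q' [cQ' [bQ' le]]] := descent (leqnn _) cQ.
  exact: le_trans (Pmin Q' (conj cQ' bQ')) le.
suff : (support_size P + m <= n * m + 1)%N.
  move=> h; lia.
case: m p hp P cP bP {Pmin c0 b0 Q0 cprod} => [|m'] p hp P cP bP.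
  rewrite addn0 muln0 add0n /support_size.
  apply: (leq_trans (max_card _)).
  by rewrite card_ffun !card_ord expn0.
case: n p hp P cP bP => [|n'] p hp P cP bP.
  by have [_] := hp ord0; rewrite big_ord0 => /eqP; rewrite eq_sym oner_eq0.
have : (support_size P <= m'.+1 * n' + 1)%N.
  rewrite leqNgt; apply/negP => /(@kernel R _ _ _) [d [dn0 [dS zd]]].
  apply: dn0; apply: bP => // t e; apply: dS; by rewrite inE e eqxx.
move=> h; lia.
Qed.
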